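(* Let $n\in\mathbf{N}$ and $A\subset[n]$ have property P, with $Z^{1(2)}_{(\frac29,\frac13]}$, $Z_B$, $Z_G$, $Z_{(\frac13,\frac12]}$ as in the context. Define $$B_3=2\cdot\big(Z^{1(2)}_{(\frac29,\frac13]}\cup Z_B\cup Z_G\big)\ \cup\ Z_{(\frac13,\frac12]}\ \cup\ \tfrac94\cdot Z_B\ \cup\ \big(A\cap(\tfrac n2,\tfrac{2n}{3}]\big),$$ and $A'''=\{m\in\mathbf{N}:3m\in A_{(\frac12,1]}+A_{(\frac12,1]}\}$ where $A_{(\frac12,1]}=A\cap(\frac n2,n]$. Then $B_3$ is a set of integers contained in $(\frac n3,\frac{2n}{3}]$, $|B_3|=\left|A\cap[1,\frac{2n}{3}]\right|+|Z_B|$, and $B_3\cap A'''=\emptyset$.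
   Context: A set $A\subset\mathbf{N}$ has property P if there are no $x,y,z\in A$ (not necessarily distinct $x,y$) with $z<x$, $z<y$ and $z\mid x+y$. Intervals denote sets of integers. For $a\in A\cap[1,\frac n2]$ let $m_a\geqslant0$ be the unique integer with $3^{m_a}a\in(\frac n6,\frac n2]$. Define $Z=\{3^{m_a}a: a\in A\cap[1,\frac n2],\ 3^{m_a}a\in(\frac{2n}{9},\frac n2]\}\cup\{2\cdot3^{m_a}a: a\in A\cap[1,\frac n2],\ 3^{m_a}a\in(\frac n6,\frac{2n}{9}]\}$. Let $Z^{1(2)}_{(\frac29,\frac13]}=Z\cap(\frac{2n}{9},\frac n3]\cap(1+2\mathbf{Z})$; $Z_B=\{z\in Z\cap(\frac{2n}{9},\frac n3]\cap2\mathbf{Z}:\frac{3z}{2}\in Z\}$; $Z_G=\{z\in Z\cap(\frac{2n}{9},\frac n3]\cap2\mathbf{Z}:\frac{3z}{2}\notin Z\}$; $Z_{(\frac13,\frac12]}=Z\cap(\frac n3,\frac n2]$. *)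

(* Defs.v *)
From HB Require Import structures.
From mathcomp Require Import all_boot all_order all_algebra finmap.
Set Implicit Arguments. Unset Strict Implicit. Unset Printing Implicit Defensive.
Import Order.TTheory GRing.Theory Num.Theory.
Local Open Scope fset_scope.

Definition propP (A : {fset nat}) : Prop :=
  forall x y z, x \in A -> y \in A -> z \in A ->
    (z < x)%N -> (z < y)%N -> ~~ (z %| x + y).

Definition in_16_12 (n x : nat) : bool := (n < 6 * x)%N && (2 * x <= n)%N.

(* m_a : the unique m >= 0 with 3^m a in (n/6, n/2]; for 1 <= a <= n/2 it
   is at most n, so it is found by a search over 0..n. *)
Definition m_a (n a : nat) : nat := find (fun m => in_16_12 n (3 ^ m * a)) (iota 0 n.+1).

Definition y_a (n a : nat) : nat := 3 ^ (m_a n a) * a.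

Definition A_low (n : nat) (A : {fset nat}) : {fset nat} :=
  [fset a in A | (1 <= a)%N && (2 * a <= n)%N].

Definition Zset (n : nat) (A : {fset nat}) : {fset nat} :=
  [fset y_a n a | a in A_low n A & (2 * n < 9 * y_a n a)%N]
  `|` [fset 2 * y_a n a | a in A_low n A & (9 * y_a n a <= 2 * n)%N].

Definition Z_29_13 (n : nat) (A : {fset nat}) : {fset nat} :=
  [fset z in Zset n A | (2 * n < 9 * z)%N && (3 * z <= n)%N].

Definition Z_odd (n : nat) (A : {fset nat}) : {fset nat} :=
  [fset z in Z_29_13 n A | odd z].

Definition Z_B (n : nat) (A : {fset nat}) : {fset nat} :=
  [fset z in Z_29_13 n A | ~~ odd z & (3 * z./2 \in Zset n A)].

Definition Z_G (n : nat) (A : {fset nat}) : {fset nat} :=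
  [fset z in Z_29_13 n A | ~~ odd z & (3 * z./2 \notin Zset n A)].

Definition Z_13_12 (n : nat) (A : {fset nat}) : {fset nat} :=
  [fset z in Zset n A | (n < 3 * z)%N && (2 * z <= n)%N].

Local Open Scope ring_scope.

(* B_3, as a finite set of rationals (9/4 * Z_B is a priori rational). *)
Definition B3 (n : nat) (A : {fset nat}) : {fset rat} :=
  [fset ((2 * z)%N%:R : rat) | z in Z_odd n A `|` Z_B n A `|` Z_G n A]
  `|` [fset (z%:R : rat) | z in Z_13_12 n A]
  `|` [fset ((9%:R / 4%:R) * z%:R : rat) | z in Z_B n A]
  `|` [fset (a%:R : rat) | a in [fset a in A | (n < 2 * a)%N && (3 * a <= 2 * n)%N]].

Definition A_high (n : nat) (A : {fset nat}) : {fset nat} :=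
  [fset a in A | (n < 2 * a)%N && (a <= n)%N].

Definition A3 (n : nat) (A : {fset nat}) (m : nat) : Prop :=
  exists x y, x \in A_high n A /\ y \in A_high n A /\ (3 * m = x + y)%N.

(* Main.v *)
Require Import Defs.
From HB Require Import structures.
From mathcomp Require Import all_boot all_order all_algebra finmap zify.
Import Order.TTheory GRing.Theory Num.Theory.
Local Open Scope fset_scope.

Section Sec1.


Lemma core {A : {fset nat}} (hP : propP A) {a b : nat} :
  a \in A -> b \in A -> (a < b)%N -> (a %| 2 * b)%N -> False.
Proof.
move=> aA bA ab d; have := hP b b a bA bA aA ab ab.
by rewrite addnn -mul2n d.
Qed.

Lemma exp3_pos k : (0 < 3 ^ k)%N.
Proof. by rewrite expn_gt0. Qed.

Lemma L2 (n : nat) (A : {fset nat})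
  (hA : forall a, a \in A -> (1 <= a)%N && (a <= n)%N) (hP : propP A) a b i j :
  a \in A -> b \in A -> (2 * (3 ^ i * a) = 3 ^ j * b)%N -> False.
Proof.
move=> aA bA e; have /andP[a1 _] := hA a aA; have /andP[b1 _] := hA b bA.
case: (leqP j i) => ij.
- have ei : (3 ^ i = 3 ^ j * 3 ^ (i - j))%N by rewrite -expnD subnKC.
  have hb : b = (2 * 3 ^ (i - j) * a)%N.
    apply/eqP; rewrite -(eqn_pmul2l (exp3_pos j)); apply/eqP.
    rewrite -e ei; lia.
  apply: (core hP aA bA).
  + have := exp3_pos (i - j); rewrite hb; nia.
  + by rewrite hb dvdn_mull // dvdn_mull.
- have ej : (3 ^ j = 3 ^ i * 3 ^ (j - i))%N by rewrite -expnD subnKC // ltnW.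
  have ha : (2 * a = 3 ^ (j - i) * b)%N.
    apply/eqP; rewrite -(eqn_pmul2l (exp3_pos i)); apply/eqP.
    rewrite ej in e; lia.
  have h3 : (3 <= 3 ^ (j - i))%N.
    by rewrite -{1}(expn1 3) leq_pexp2l // subn_gt0.
  apply: (core hP bA aA).
  + nia.
  + by rewrite ha dvdn_mull.
Qed.

Lemma L0 (n : nat) (A : {fset nat})
  (hA : forall a, a \in A -> (1 <= a)%N && (a <= n)%N) (hP : propP A) a b i j :
  a \in A -> b \in A -> (3 ^ i * a = 3 ^ j * b)%N -> a = b.
Proof.
move=> aA bA e; have /andP[a1 _] := hA a aA; have /andP[b1 _] := hA b bA.
case: (ltngtP a b) => // ab; exfalso.
- case: (leqP i j) => ij.
  + have ej : (3 ^ j = 3 ^ i * 3 ^ (j - i))%N by rewrite -expnD subnKC.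
    have := exp3_pos (j - i); have := exp3_pos i; rewrite ej in e; nia.
  + have ei : (3 ^ i = 3 ^ j * 3 ^ (i - j))%N by rewrite -expnD subnKC // ltnW.
    have hb : b = (3 ^ (i - j) * a)%N.
      apply/eqP; rewrite -(eqn_pmul2l (exp3_pos j)); apply/eqP.
      rewrite ei in e; lia.
    apply: (core hP aA bA ab); by rewrite hb dvdn_mull // dvdn_mull.
- case: (leqP j i) => ij.
  + have ei : (3 ^ i = 3 ^ j * 3 ^ (i - j))%N by rewrite -expnD subnKC.
    have := exp3_pos (i - j); have := exp3_pos j; rewrite ei in e; nia.
  + have ej : (3 ^ j = 3 ^ i * 3 ^ (j - i))%N by rewrite -expnD subnKC // ltnW.
    have ha : a = (3 ^ (j - i) * b)%N.
      apply/eqP; rewrite -(eqn_pmul2l (exp3_pos i)); apply/eqP.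
      rewrite ej in e; lia.
    apply: (core hP bA aA ab); by rewrite ha dvdn_mull // dvdn_mull.
Qed.

Lemma ya_spec {n a : nat} : (1 <= a)%N -> (2 * a <= n)%N ->
  in_16_12 n (y_a n a).
Proof.
move=> a1 a2.
have ex : exists i, (fun m => 2 * (3 ^ m * a) <= n)%N i by exists 0%N; rewrite expn0 mul1n.
have ub : forall i, (fun m => 2 * (3 ^ m * a) <= n)%N i -> (i <= n)%N.
  move=> i /= h; have := ltn_expl i (isT : (1 < 3)%N); nia.
case: (ex_maxnP ex ub) => m hm hmax.
have hm1 : ~~ (2 * (3 ^ m.+1 * a) <= n)%N.
  by apply/negP => /hmax; rewrite ltnn.
have hin : in_16_12 n (3 ^ m * a).
  rewrite /in_16_12 expnS in hm1 *; apply/andP; split; lia.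
have hh : has (fun m => in_16_12 n (3 ^ m * a)) (iota 0 n.+1).
  apply/hasP; exists m => //; rewrite mem_iota /= add0n ltnS; exact: ub.
rewrite /y_a /m_a.
have := nth_find 0%N hh; rewrite nth_iota ?add0n //.
by move: hh; rewrite has_find size_iota.
Qed.

End Sec1.

Section Sec2.

Local Set Implicit Arguments. Local Unset Strict Implicit.

Lemma Zset_mem n (A : {fset nat}) z : z \in Zset n A -> exists a, [/\ a \in A, (1 <= a)%N, (2 * a <= n)%N &
   ((2 * n < 9 * y_a n a)%N /\ z = y_a n a) \/ ((9 * y_a n a <= 2 * n)%N /\ z = (2 * y_a n a)%N)].
Proof.
rewrite in_fsetU => /orP[] /imfsetP [a /= /andP[] ha hy ->];
  move: ha; rewrite inE /= => /andP[aA /andP[a1 a2]]; exists a; split => //; by [left|right].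
Qed.

Lemma Zset_in n (A : {fset nat}) a : a \in A -> (1 <= a)%N -> (2 * a <= n)%N ->
  (if (2 * n < 9 * y_a n a)%N then y_a n a else (2 * y_a n a)%N) \in Zset n A.
Proof.
move=> aA a1 a2; have aL : a \in A_low n A by rewrite /A_low !inE /= aA a1 a2.
case: ifP => h; rewrite in_fsetU; apply/orP; [left|right]; apply/imfsetP; exists a => //=.
  all: by rewrite inE /= aL /=; lia.
Qed.

Lemma Zset_prop n (A : {fset nat}) z : z \in Zset n A -> [/\ (2 * n < 9 * z)%N, (2 * z <= n)%N &
   exists a, [/\ a \in A, (2 * a <= n)%N & (a %| z)%N]].
Proof.
move=> /Zset_mem [a [aA a1 a2 H]]; have := ya_spec a1 a2; rewrite /in_16_12 => /andP[h1 h2].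
have ad : (a %| y_a n a)%N by rewrite /y_a dvdn_mull.
case: H => -[h ->]; split => //; try lia; exists a; split => //.
by rewrite dvdn_mull.
Qed.

Lemma Z2913_mem n (A : {fset nat}) z : z \in Z_29_13 n A = [&& z \in Zset n A, (2 * n < 9 * z)%N & (3 * z <= n)%N].
Proof. by rewrite inE. Qed.

Lemma Z2913_y n (A : {fset nat}) z : z \in Z_29_13 n A -> exists a, [/\ a \in A, (1 <= a)%N, (2 * a <= n)%N &
   z = y_a n a].
Proof.
rewrite Z2913_mem => /and3P[/Zset_mem [a [aA a1 a2 H]] h1 h2].
have := ya_spec a1 a2; rewrite /in_16_12 => /andP[h3 h4].
exists a; split => //; case: H => -[h e] //; lia.
Qed.

Lemma ZB_spec n (A : {fset nat}) (hA : forall a, a \in A -> (1 <= a)%N && (a <= n)%N) (hP : propP A) z :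
  z \in Z_B n A -> exists b, [/\ b \in A, (1 <= b)%N, (2 * b <= n)%N,
     (3 * z = 4 * y_a n b)%N & (9 * y_a n b <= 2 * n)%N].
Proof.
rewrite inE /= => /andP[zZ /andP[ev hz]].
have [a [aA a1 a2 ez]] := Z2913_y zZ.
have e2 := odd_double_half z; rewrite (negbTE ev) add0n -mul2n in e2.
have [b [bA b1 b2 H]] := Zset_mem hz.
exists b; case: H => -[h e].
- exfalso; apply: (@L2 n A hA hP b a (m_a n b) (m_a n a).+1 bA aA).
  rewrite -/(y_a n b) expnS -mulnA -/(y_a n a) -ez -e; lia.
- split => //; lia.
Qed.

End Sec2.

Section Sec3.

Local Set Implicit Arguments. Local Unset Strict Implicit.

Definition P1N n (A : {fset nat}) := [fset (2 * z)%N | z in Z_29_13 n A].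
Definition P3N n (A : {fset nat}) := [fset (9 * z %/ 4)%N | z in Z_B n A].
Definition P4N n (A : {fset nat}) := [fset a in A | (n < 2 * a)%N && (3 * a <= 2 * n)%N].
Definition BN n (A : {fset nat}) := P1N n A `|` Z_13_12 n A `|` P3N n A `|` P4N n A.

Lemma Zunion n (A : {fset nat}) z : (z \in Z_odd n A `|` Z_B n A `|` Z_G n A) = (z \in Z_29_13 n A).
Proof.
rewrite /Z_odd /Z_B /Z_G; move: (Z_29_13 n A) (Zset n A) => S T; rewrite !inE.
case: (z \in S); case: (odd z); by case: (_ \in T).
Qed.

Local Open Scope ring_scope.

Lemma ninefour (z k : nat) : (9 * z = 4 * k)%N -> (9%:R / 4%:R) * z%:R = (k%:R : rat).
Proof.
move=> e.
have -> : (k%:R : rat) = ((4*k)%N)%:R / 4%:R by rewrite natrM mulrAC divff ?mul1r.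
by rewrite -e natrM mulrAC.
Qed.

Lemma B3_to n (A : {fset nat}) (hA : forall a, a \in A -> (1 <= a)%N && (a <= n)%N) (hP : propP A) x :
  x \in B3 n A -> exists k, k \in BN n A /\ x = k%:R.
Proof.
rewrite /B3 !in_fsetU => /orP[/orP[/orP[]|]|].
- move=> /imfsetP [z /= hz ->]; exists (2 * z)%N; split => //.
  rewrite /BN !in_fsetU; apply/orP; left; apply/orP; left; apply/orP; left.
  apply/imfsetP; exists z => //=; by rewrite -Zunion.
- move=> /imfsetP [z /= hz ->]; exists z; split => //.
  by rewrite /BN !in_fsetU hz /= orbT.
- move=> /imfsetP [z /= hz ->]; exists (9 * z %/ 4)%N; split.
  + rewrite /BN !in_fsetU; apply/orP; left; apply/orP; right.
    by apply/imfsetP; exists z.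
  + have [b [_ _ _ e _]] := ZB_spec hA hP hz; apply: ninefour; lia.
- move=> /imfsetP [a /= ha ->]; exists a; split => //.
  by rewrite /BN !in_fsetU ha orbT.
Qed.

Lemma B3_from n (A : {fset nat}) (hA : forall a, a \in A -> (1 <= a)%N && (a <= n)%N) (hP : propP A) k :
  k \in BN n A -> (k%:R : rat) \in B3 n A.
Proof.
rewrite /BN /B3 !in_fsetU => /orP[/orP[/orP[]|]|].
- move=> /imfsetP [z /= hz ->]; apply/orP; left; apply/orP; left; apply/orP; left.
  apply/imfsetP; exists z => //=; by rewrite Zunion.
- move=> hz; apply/orP; left; apply/orP; left; apply/orP; right.
  by apply/imfsetP; exists k.
- move=> /imfsetP [z /= hz ->]; apply/orP; left; apply/orP; right.
  apply/imfsetP; exists z => //=.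
  have [b [_ _ _ e _]] := ZB_spec hA hP hz; symmetry; apply: ninefour; lia.
- move=> ha; apply/orP; right; by apply/imfsetP; exists k.
Qed.

Lemma B3_eq n (A : {fset nat}) (hA : forall a, a \in A -> (1 <= a)%N && (a <= n)%N) (hP : propP A) :
  B3 n A = [fset (k%:R : rat) | k in BN n A].
Proof.
apply/fsetP => x; apply/idP/idP.
- move=> /(B3_to hA hP) [k [hk ->]]; by apply/imfsetP; exists k.
- move=> /imfsetP [k /= hk ->]; exact: B3_from.
Qed.

End Sec3.

Section Sec4.

Local Set Implicit Arguments. Local Unset Strict Implicit.

Lemma mem_sep (S : {fset nat}) (P : pred nat) k :
  (k \in [fset x in S | P x]) = (k \in S) && P k.
Proof. by rewrite inE. Qed.

Lemma P1_mem n (A : {fset nat}) k : k \in P1N n A -> exists a, [/\ a \in A, (1 <= a)%N, (2 * a <= n)%N,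
   k = (2 * y_a n a)%N & (2 * n < 9 * y_a n a)%N && (3 * y_a n a <= n)%N].
Proof.
move=> /imfsetP [z /= hz ->]; have [a [aA a1 a2 e]] := Z2913_y hz.
move: hz; rewrite Z2913_mem => /and3P[_ h1 h2].
exists a; split => //; [by rewrite e | rewrite -e; apply/andP; split => //].
Qed.

Lemma P2_mem n (A : {fset nat}) k : k \in Z_13_12 n A ->
  [/\ k \in Zset n A, (n < 3 * k)%N & (2 * k <= n)%N].
Proof. by rewrite /Z_13_12 mem_sep => /andP[h /andP[]]. Qed.

Lemma P3_mem n (A : {fset nat}) (hA : forall a, a \in A -> (1 <= a)%N && (a <= n)%N) (hP : propP A) k :
  k \in P3N n A -> exists b, [/\ b \in A, (1 <= b)%N, (2 * b <= n)%N,
   k = (3 * y_a n b)%N & (9 * y_a n b <= 2 * n)%N && (n < 6 * y_a n b)%N].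
Proof.
move=> /imfsetP [z /= hz ->]; have [b [bA b1 b2 e h]] := ZB_spec hA hP hz.
have := ya_spec b1 b2; rewrite /in_16_12 => /andP[h1 h2].
exists b; split => //; first lia. by rewrite h h1.
Qed.

Lemma P4_mem n (A : {fset nat}) k : k \in P4N n A -> [/\ k \in A, (n < 2 * k)%N & (3 * k <= 2 * n)%N].
Proof. by rewrite /P4N mem_sep => /andP[h /andP[]]. Qed.

Lemma BN_range n (A : {fset nat}) (hA : forall a, a \in A -> (1 <= a)%N && (a <= n)%N) (hP : propP A) k :
  k \in BN n A -> (n < 3 * k)%N && (3 * k <= 2 * n)%N.
Proof.
rewrite /BN !in_fsetU => /orP[/orP[/orP[]|]|].
- move=> /P1_mem [a [_ _ _ -> /andP[h1 h2]]]; apply/andP; split; lia.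
- move=> /P2_mem [_ h1 h2]; apply/andP; split; lia.
- move=> /(P3_mem hA hP) [a [_ _ _ -> /andP[h1 h2]]]; apply/andP; split; lia.
- move=> /P4_mem [_ h1 h2]; apply/andP; split; lia.
Qed.

Lemma BN_div n (A : {fset nat}) (hA : forall a, a \in A -> (1 <= a)%N && (a <= n)%N) (hP : propP A) k :
  k \in BN n A -> k \notin P4N n A -> exists a, [/\ a \in A, (2 * a <= n)%N & (a %| k)%N].
Proof.
rewrite /BN !in_fsetU => /orP[/orP[/orP[]|]|].
- move=> /P1_mem [a [aA _ a2 -> _]] _; exists a; split => //.
  by rewrite /y_a dvdn_mull // dvdn_mull.
- by move=> /P2_mem [/Zset_prop [_ _ h] _ _].
- move=> /(P3_mem hA hP) [a [aA _ a2 -> _]] _; exists a; split => //.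
  by rewrite /y_a dvdn_mull // dvdn_mull.
- by move=> ->.
Qed.

End Sec4.

Section Sec5.

Local Set Implicit Arguments. Local Unset Strict Implicit.

Lemma part3 n (A : {fset nat}) (hA : forall a, a \in A -> (1 <= a)%N && (a <= n)%N) (hP : propP A) k :
  k \in BN n A -> ~ A3 n A k.
Proof.
move=> hk [x [y [hx [hy e]]]].
move: hx hy; rewrite /A_high !mem_sep => /andP[xA /andP[x1 x2]] /andP[yA /andP[y1 y2]].
case: (boolP (k \in P4N n A)) => h4.
- have [kA k1 k2] := P4_mem h4.
  case: (ltnP k x) => kx; last lia.
  case: (ltnP k y) => ky; last lia.
  have := hP x y k xA yA kA kx ky; by rewrite -e dvdn_mull.
- have [a [aA a2 ad]] := BN_div hA hP hk h4.
  have := hP x y a xA yA aA ltac:(lia) ltac:(lia); by rewrite -e dvdn_mull.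
Qed.

Lemma cardU_disj (X Y : {fset nat}) : (forall x, x \in X -> x \in Y -> False) ->
  #|` X `|` Y| = (#|` X| + #|` Y|)%N.
Proof.
move=> H; rewrite -cardfsUI.
have -> : X `&` Y = fset0.
  apply/fsetP => x; rewrite inE in_fset0; apply/negP => /andP[a b]; exact: H a b.
by rewrite cardfs0 addn0.
Qed.

Lemma card_P1 n (A : {fset nat}) : #|` P1N n A| = #|` Z_29_13 n A|.
Proof. apply/eqP/card_in_imfsetP => x y _ _ /=; lia. Qed.

Lemma card_P3 n (A : {fset nat}) (hA : forall a, a \in A -> (1 <= a)%N && (a <= n)%N) (hP : propP A) :
  #|` P3N n A| = #|` Z_B n A|.
Proof.
apply/eqP/card_in_imfsetP => x y hx hy /=.
have [b [_ _ _ e1 _]] := ZB_spec hA hP hx; have [c [_ _ _ e2 _]] := ZB_spec hA hP hy.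
lia.
Qed.

Lemma card_BN n (A : {fset nat}) (hA : forall a, a \in A -> (1 <= a)%N && (a <= n)%N) (hP : propP A) :
  #|` BN n A| = (#|` Z_29_13 n A| + #|` Z_13_12 n A| + #|` Z_B n A| + #|` P4N n A|)%N.
Proof.
rewrite /BN -card_P1 -(card_P3 hA hP).
rewrite cardU_disj; last first.
  move=> k; rewrite !in_fsetU => /orP[/orP[]|] h h4; have [kA k1 k2] := P4_mem h4.
  - have [a [aA _ _ e _]] := P1_mem h.
    apply: (@L2 n A hA hP a k (m_a n a) 0 aA kA); rewrite expn0 mul1n -e //.
  - have [_ h1 h2] := P2_mem h; lia.
  - have [b [bA b1 _ e _]] := P3_mem hA hP h.
    apply: (core hP bA kA).
    + rewrite e /y_a; have := exp3_pos (m_a n b); nia.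
    + by rewrite e /y_a dvdn_mull // dvdn_mull // dvdn_mull.
rewrite cardU_disj; last first.
  move=> k; rewrite !in_fsetU => /orP[] h h3; have [b [bA b1 b2 e3 /andP[h31 h32]]] := P3_mem hA hP h3.
  - have [a [aA _ _ e _]] := P1_mem h.
    apply: (@L2 n A hA hP a b (m_a n a) (m_a n b).+1 aA bA).
    by rewrite expnS -mulnA -/(y_a n a) -/(y_a n b) -e -e3.
  - have [_ h1 h2] := P2_mem h; lia.
rewrite cardU_disj //.
move=> k h h2; have [a [aA _ _ e /andP[h11 h12]]] := P1_mem h.
have [hz h21 h22] := P2_mem h2.
have [b [bA b1 b2 H]] := Zset_mem hz.
case: H => -[hb eb].
- apply: (@L2 n A hA hP a b (m_a n a) (m_a n b) aA bA).
  by rewrite -/(y_a n a) -/(y_a n b) -e -eb.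
- lia.
Qed.

End Sec5.

Section Sec6.

Local Set Implicit Arguments. Local Unset Strict Implicit.

Lemma card_Zsplit n (A : {fset nat}) : (#|` Z_29_13 n A| + #|` Z_13_12 n A|)%N = #|` Zset n A|.
Proof.
rewrite -cardU_disj.
- congr (#|` _|); apply/fsetP => z; rewrite in_fsetU Z2913_mem /Z_13_12 mem_sep.
  case: (boolP (z \in Zset n A)) => //= hz; have [h1 h2 _] := Zset_prop hz.
  case: (leqP (3 * z) n) => h3 /=; rewrite ?h1 ?h2 ?h3; lia.
- move=> z; rewrite Z2913_mem /Z_13_12 mem_sep => /and3P[_ _ h1] /andP[_ /andP[h2 _]]; lia.
Qed.

Lemma card_Zset n (A : {fset nat}) (hA : forall a, a \in A -> (1 <= a)%N && (a <= n)%N) (hP : propP A) :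
  #|` Zset n A| = #|` A_low n A|.
Proof.
have -> : Zset n A = [fset (if (2 * n < 9 * y_a n a)%N then y_a n a else (2 * y_a n a)%N)
                        | a in A_low n A].
  apply/fsetP => z; apply/idP/idP.
  - move=> /Zset_mem [a [aA a1 a2 H]]; apply/imfsetP; exists a.
    + by rewrite /A_low mem_sep aA a1 a2.
    + case: H => -[h ->] /=; case: ifP => //; lia.
  - move=> /imfsetP [a /=]; rewrite /A_low mem_sep => /andP[aA /andP[a1 a2]] ->.
    exact: Zset_in.
apply/eqP/card_in_imfsetP => a b.
rewrite /A_low !mem_sep => /andP[aA _] /andP[bA _] /=.
case: ifP => _; case: ifP => _ e.
- exact: (@L0 n A hA hP a b (m_a n a) (m_a n b) aA bA).
- exfalso; apply: (@L2 n A hA hP b a (m_a n b) (m_a n a) bA aA); by rewrite -/(y_a n a) -/(y_a n b) e.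
- exfalso; apply: (@L2 n A hA hP a b (m_a n a) (m_a n b) aA bA); by rewrite -/(y_a n a) -/(y_a n b) e.
- apply: (@L0 n A hA hP a b (m_a n a) (m_a n b) aA bA); rewrite -/(y_a n a) -/(y_a n b); lia.
Qed.

Lemma card_target n (A : {fset nat}) (hA : forall a, a \in A -> (1 <= a)%N && (a <= n)%N) :
  #|` [fset a in A | (1 <= a)%N && (3 * a <= 2 * n)%N]| = (#|` A_low n A| + #|` P4N n A|)%N.
Proof.
rewrite -cardU_disj.
- congr (#|` _|); apply/fsetP => z; rewrite in_fsetU /A_low /P4N !mem_sep ?inE.
  case: (boolP (z \in A)) => //= hz; have /andP[h1 h2] := hA z hz.
  rewrite h1 /=; lia.
- move=> z; rewrite /A_low /P4N !mem_sep => /andP[_ /andP[_ h1]] /andP[_ /andP[h2 _]]; lia.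
Qed.

End Sec6.

Local Open Scope ring_scope.
Theorem mainTheorem17 (n : nat) (A : {fset nat})
  (hA : forall a, a \in A -> (1 <= a)%N && (a <= n)%N)
  (hP : propP A) :
  (forall x, x \in B3 n A ->
     x \is a Num.int /\ (n%:R / 3%:R < x) /\ (x <= 2%:R * n%:R / 3%:R))
  /\ #|` B3 n A| = (#|` [fset a in A | (1 <= a)%N && (3 * a <= 2 * n)%N]| + #|` Z_B n A|)%N
  /\ (forall m : nat, (m%:R : rat) \in B3 n A -> ~ A3 n A m).
Proof.
split; [|split].
- move=> x /(B3_to hA hP) [k [hk ->]]; have /andP[h1 h2] := BN_range hA hP hk.
  split; first exact: natr_int.
  split.
  + by rewrite ltr_pdivrMr ?ltr0n // -natrM ltr_nat mulnC.
  + by rewrite ler_pdivlMr ?ltr0n // -!natrM ler_nat mulnC.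
- rewrite (B3_eq hA hP).
  have -> : #|` [fset (k%:R : rat) | k in BN n A]| = #|` BN n A|.
    by apply/eqP/card_in_imfsetP => x y _ _ /= /eqP; rewrite eqr_nat => /eqP.
  rewrite (card_BN hA hP) (card_target hA) -(card_Zset hA hP) -card_Zsplit.
  lia.
- move=> m /(B3_to hA hP) [k [hk /eqP]]; rewrite eqr_nat => /eqP ->.
  exact: (part3 hA hP hk).
Qed.
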